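(* Let $\varepsilon>0$, $\kappa\ge\frac14$, $\Delta t>0$, and set $\kappa^*=\kappa-\frac18$, $C_4=\frac{1}{1-e^{-2}}$, $\gamma^{(0)}=3C_4(1+\kappa)$, and $\alpha_0=\ln\Big(\frac{\gamma^{(0)}+\frac12\kappa}{\gamma^{(0)}-\frac12\kappa}\Big)$ (the unique positive solution of $\frac{e^{-\alpha_0}}{1-e^{-\alpha_0}}+\frac12=\frac{\gamma^{(0)}}{\kappa}$). Suppose $$A\ge \Big(\gamma^{(0)}-\frac{\kappa}{4}\Big)^4\alpha_0^{-2}\varepsilon^{-2}.$$ Then for every real periodic grid function $f$ with zero mean, $$\Big(\frac{\varepsilon^2}{2}+A\Delta t^2\Big)\|\Delta_N f\|_2^2+\kappa^*\|\nabla_N f\|_2^2+\Big\langle\Big(\frac{1}{\Delta t}\mathcal G_N-L_N\Big)f,f\Big\rangle\ge \gamma^{(0)}\|\nabla_N f\|_2^2.$$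
   Context: Setting: $\Omega=(0,1)^2$, $N=2K+1$, $h=1/N$, grid $x_i=ih$, $y_j=jh$; periodic grid functions have discrete Fourier expansions $f_{i,j}=\sum_{k,\ell=-K}^{K}\hat f_{k,\ell}\exp(2\pi\mathrm{i}(kx_i+\ell y_j))$. Spectral operators act as Fourier multipliers: $\mathcal D_{Nx}$, $\mathcal D_{Ny}$ by $2\pi\mathrm{i}k$, $2\pi\mathrm{i}\ell$; $\nabla_N f=(\mathcal D_{Nx}f,\mathcal D_{Ny}f)$; $\Delta_N$ by $-\lambda_{k,\ell}$, $\lambda_{k,\ell}=(2k\pi)^2+(2\ell\pi)^2$. Inner product $\langle f,g\rangle=h^2\sum_{i,j}f_{i,j}g_{i,j}$, $\|f\|_2=\langle f,f\rangle^{1/2}$. $L_N=\varepsilon^2\Delta_N^2-\kappa\Delta_N$ has multiplier $\Lambda_{k,\ell}=\varepsilon^2\lambda_{k,\ell}^2+\kappa\lambda_{k,\ell}$. On zero-mean grid functions, $\mathcal G_N=\Delta tL_N(I-e^{-\Delta tL_N})^{-1}$ is the multiplier $\frac{\Delta t\Lambda_{k,\ell}}{1-e^{-\Delta t\Lambda_{k,\ell}}}$ on modes $(k,\ell)\ne(0,0)$. *)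

(* Defs.v *)
From mathcomp Require Import all_boot all_order all_algebra.
From mathcomp Require Import complex.
From mathcomp Require Import all_classical all_reals all_analysis.
Set Implicit Arguments. Unset Strict Implicit. Unset Printing Implicit Defensive.
Import Order.TTheory GRing.Theory Num.Theory.
Local Open Scope ring_scope.
Local Open Scope complex_scope.

Notation gidx K := 'I_(2 * K + 1).

(* The frequency attached to an index k' : 'I_(2K+1) is k = k' - K in {-K..K}. *)
Definition freq (K : nat) (k : gidx K) : int := (nat_of_ord k)%:Z - K%:Z.

Definition hstep (R : realType) (K : nat) : R := ((2 * K + 1)%N%:R)^-1.

Definition gpt (R : realType) (K : nat) (i : gidx K) : R := (nat_of_ord i)%:R * hstep R K.

Definition cis (R : realType) (t : R) : R[i] := cos t +i* sin t.

Definition fmode (R : realType) (K : nat) (k l i j : gidx K) : R[i] :=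
  cis (2 * pi * ((freq k)%:~R * gpt R i + (freq l)%:~R * gpt R j)).

Definition rgrid (R : realType) (K : nat) := gidx K -> gidx K -> R.
Definition cgrid (R : realType) (K : nat) := gidx K -> gidx K -> R[i].

(* Discrete Fourier coefficients: f_ij = sum_{k,l} fhat_kl exp(2 pi i (k x_i + l y_j)) *)
Definition fhat (R : realType) (K : nat) (f : rgrid R K) (k l : gidx K) : R[i] :=
  ((2 * K + 1)%N%:R ^+ 2)^-1 *
  \sum_(i : gidx K) \sum_(j : gidx K) (f i j)%:C * (fmode R k l i j)^*.

Definition fmult (R : realType) (K : nat) (m : int -> int -> R[i]) (f : rgrid R K)
  : cgrid R K :=
  fun i j => \sum_(k : gidx K) \sum_(l : gidx K)
               m (freq k) (freq l) * fhat f k l * fmode R k l i j.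

Definition lam (R : realType) (k l : int) : R :=
  (2 * k%:~R * pi) ^+ 2 + (2 * l%:~R * pi) ^+ 2.

Definition Lam (R : realType) (eps kappa : R) (k l : int) : R :=
  eps ^+ 2 * lam R k l ^+ 2 + kappa * lam R k l.

Definition DNx (R : realType) (K : nat) (f : rgrid R K) : cgrid R K :=
  fmult (fun k l => 0 +i* (2 * pi * k%:~R)) f.
Definition DNy (R : realType) (K : nat) (f : rgrid R K) : cgrid R K :=
  fmult (fun k l => 0 +i* (2 * pi * l%:~R)) f.
Definition LapN (R : realType) (K : nat) (f : rgrid R K) : cgrid R K :=
  fmult (fun k l => (- lam R k l)%:C) f.
Definition LN (R : realType) (K : nat) (eps kappa : R) (f : rgrid R K) : cgrid R K :=
  fmult (fun k l => (Lam eps kappa k l)%:C) f.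
(* G_N on zero-mean functions; the (0,0) multiplier is irrelevant there (set to 0). *)
Definition GN (R : realType) (K : nat) (eps kappa dt : R) (f : rgrid R K) : cgrid R K :=
  fmult (fun k l => if (k == 0) && (l == 0) then 0
                    else (dt * Lam eps kappa k l
                          / (1 - expR (- (dt * Lam eps kappa k l))))%:C) f.

(* <g1, g2> = h^2 sum g1 g2  (Re of h^2 sum g1 conj(g2); equal for real grid functions) *)
Definition ginner (R : realType) (K : nat) (g1 g2 : cgrid R K) : R :=
  hstep R K ^+ 2 * \sum_(i : gidx K) \sum_(j : gidx K) complex.Re (g1 i j * (g2 i j)^*).

Definition gnorm2 (R : realType) (K : nat) (g : cgrid R K) : R := ginner g g.

Definition gradnorm2 (R : realType) (K : nat) (f : rgrid R K) : R :=
  gnorm2 (DNx f) + gnorm2 (DNy f).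

Definition liftC (R : realType) (K : nat) (f : rgrid R K) : cgrid R K :=
  fun i j => (f i j)%:C.

Definition C4 (R : realType) : R := (1 - expR (-2))^-1.
Definition gamma0 (R : realType) (kappa : R) : R := 3 * C4 R * (1 + kappa).
Definition kstar (R : realType) (kappa : R) : R := kappa - 8^-1.
Definition alpha0 (R : realType) (kappa : R) : R :=
  ln ((gamma0 kappa + 2^-1 * kappa) / (gamma0 kappa - 2^-1 * kappa)).

(* Main.v *)
Require Import Defs.
From mathcomp Require Import all_boot all_order all_algebra.
From mathcomp Require Import complex.
From mathcomp Require Import all_classical all_reals all_analysis.
From mathcomp Require Import ring lra zify.
Import Order.TTheory GRing.Theory Num.Theory.
Local Open Scope ring_scope.
Local Open Scope complex_scope.

Lemma cisD (R : realType) (a b : R) : cis (a + b) = cis a * cis b.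
Proof.
rewrite /cis cosD sinD; simpc; congr (_ +i* _); ring.
Qed.

Lemma cisN (R : realType) (a : R) : Num.conj (cis a) = cis (- a).
Proof. by rewrite /cis cosN sinN. Qed.

Lemma cis0 (R : realType) : cis (0 : R) = 1.
Proof. by rewrite /cis cos0 sin0. Qed.

Lemma cisMn (R : realType) (t : R) n : cis (t *+ n) = cis t ^+ n.
Proof.
elim: n => [|n IH]; first by rewrite mulr0n expr0 cis0.
by rewrite mulrS cisD IH exprS.
Qed.

Lemma cis2pi (R : realType) : cis (pi *+ 2 : R) = 1.
Proof. by rewrite /cis cos2pi sin2pi. Qed.

Lemma cis_int (R : realType) (m : int) : cis (2 * pi * m%:~R : R) = 1.
Proof.
have Hn : forall n : nat, cis (2 * pi * n%:R : R) = 1.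
  move=> n; rewrite mulr_natr mulr_natl cisMn.
  by rewrite cis2pi expr1n.
case: m => n; first by rewrite -pmulrn Hn.
rewrite NegzE mulrNz mulrN -cisN -pmulrn Hn.
exact: rmorph1.
Qed.

Lemma cos_ne1 (R : realType) (t : R) : - (pi *+ 2) < t < pi *+ 2 -> t != 0 -> cos t != 1.
Proof.
wlog Ht : t / 0 < t.
  move=> W H0 H1; case: (ltgtP t 0) => Ht.
  - rewrite -cosN; apply: W; rewrite ?oppr_gt0 //.
      by rewrite ltrN2 andbC ltrNl; move: H0 => /andP[-> ->].
    by rewrite oppr_eq0.
  - exact: W.
  - by rewrite Ht eqxx in H1.
move=> /andP[_ H2] _.
have -> : t = (t / 2) *+ 2 by rewrite -mulr_natr mulfVK.
rewrite cos_mulr2n cos2sin2.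
have : 0 < sin (t / 2).
  apply: sin_gt0_pi; apply/andP; split; first by rewrite divr_gt0.
  by rewrite ltr_pdivrMr // mulr_natr.
move=> Hs; apply/negP => /eqP H.
have : sin (t/2) ^+ 2 = 0 by move: H; rewrite -mulr_natr; lra.
by move/eqP; rewrite sqrf_eq0 => /eqP Hz; rewrite Hz ltxx in Hs.
Qed.

Lemma Nnz (R : realType) K : ((2 * K + 1)%N%:R : R) != 0.
Proof. by rewrite pnatr_eq0 addn1. Qed.

Lemma sum1d (R : realType) K (m : int) :
  (- (2 * K + 1)%N%:Z < m < (2 * K + 1)%N%:Z)%R ->
  \sum_(i : gidx K) cis (2 * pi * m%:~R * gpt R i) =
  if m == 0 then ((2 * K + 1)%N%:R : R[i]) else 0.
Proof.
move=> Hm; case: eqP => [->|/eqP m0].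
  under eq_bigr do rewrite mulr0 mul0r cis0.
  by rewrite sumr_const card_ord.
set N := (2 * K + 1)%N.
set z := cis (2 * pi * m%:~R * hstep R K).
have Ht : forall i : gidx K, cis (2 * pi * m%:~R * gpt R i) = z ^+ i.
  by move=> i; rewrite /z -cisMn /gpt -mulr_natr; congr cis; ring.
under eq_bigr do rewrite Ht.
have zN : z ^+ N = 1.
  rewrite /z -cisMn.
  have -> : (2 * pi * m%:~R * hstep R K) *+ N = 2 * pi * m%:~R.
    by rewrite -mulrnAr /hstep -[_^-1 *+ N]mulr_natl mulfV ?Nnz // mulr1.
  exact: cis_int.
have z1 : z != 1.
  apply/negP => /eqP zE.
  have : cos (2 * pi * m%:~R * hstep R K) = 1 by move: zE; rewrite /z /cis => -[].
  apply/eqP; apply: cos_ne1.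
  - have hp : 0 < hstep R K by rewrite /hstep invr_gt0 ltr0n addn1.
    have Hm' : (- (N%:R) < (m%:~R : R) < N%:R).
      move: Hm => /andP[a b]; apply/andP; split.
      - have : ((- N%:Z)%:~R : R) < m%:~R by rewrite ltr_int.
        by rewrite mulrNz.
      - have : (m%:~R : R) < (N%:Z)%:~R by rewrite ltr_int.
        by [].
    have hN : N%:R * hstep R K = 1 by rewrite /hstep mulfV ?Nnz.
    have pi0 : 0 < (pi : R) by exact: pi_gt0.
    move: Hm' => /andP[H1 H2].
    rewrite -(mulr_natl pi 2).
    have H4 : -1 < m%:~R * hstep R K by nra.
    have H5 : m%:~R * hstep R K < 1 by nra.
    apply/andP; split; nra.
  - rewrite !mulf_neq0 // ?pi_neq0 ?intr_eq0 //.
    + by apply: lt0r_neq0; exact: pi_gt0.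
    + by rewrite /hstep invr_eq0 Nnz.
have : (z - 1) * \sum_(i < N) z ^+ i = 0 by rewrite -subrX1 zN subrr.
by move/eqP; rewrite mulf_eq0 subr_eq0 (negbTE z1) /= => /eqP.
Qed.

Lemma freq_sub K (k k' : gidx K) : freq k - freq k' = (k : nat)%:Z - (k' : nat)%:Z.
Proof. rewrite /freq; ring. Qed.

Lemma freq_sub_eq0 K (k k' : gidx K) : (freq k - freq k' == 0) = (k == k').
Proof.
rewrite freq_sub; apply/eqP/eqP => [H|->]; last by rewrite subrr.
apply: val_inj => /=; lia.
Qed.

Lemma freq_sub_bd K (k k' : gidx K) :
  (- (2 * K + 1)%N%:Z < freq k - freq k' < (2 * K + 1)%N%:Z)%R.
Proof.
rewrite freq_sub; have := ltn_ord k; have := ltn_ord k'.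
move=> h1 h2; apply/andP; split; lia.
Qed.

Lemma orth (R : realType) K (k l k' l' : gidx K) :
  \sum_(i : gidx K) \sum_(j : gidx K) fmode R k l i j * Num.conj (fmode R k' l' i j) =
  if (k == k') && (l == l') then ((2 * K + 1)%N%:R ^+ 2 : R[i]) else 0.
Proof.
have E : forall i j, fmode R k l i j * Num.conj (fmode R k' l' i j) =
   cis (2 * pi * (freq k - freq k')%:~R * gpt R i) *
   cis (2 * pi * (freq l - freq l')%:~R * gpt R j).
  move=> i j; rewrite /fmode cisN -!cisD; congr cis; rewrite !intrB; ring.
under eq_bigr do under eq_bigr do rewrite E.
rewrite -big_distrlr /= !sum1d ?freq_sub_bd // !freq_sub_eq0.
by case: (k == k'); case: (l == l'); rewrite /= ?mul0r ?mulr0 ?expr2.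
Qed.

Lemma fmult_pair (R : realType) K m (f : rgrid R K) i j :
  fmult m f i j = \sum_(q : gidx K * gidx K)
     m (freq q.1) (freq q.2) * fhat f q.1 q.2 * fmode R q.1 q.2 i j.
Proof. by rewrite /fmult pair_bigA. Qed.

Lemma sum_delta (R : realType) K (c : gidx K * gidx K -> gidx K * gidx K -> R[i]) (M : R[i]) :
  \sum_q \sum_r c q r * (if (q.1 == r.1) && (q.2 == r.2) then M else 0) =
  M * \sum_q c q q.
Proof.
rewrite mulr_sumr; apply: eq_bigr => q _.
rewrite (bigD1 q) //= !eqxx /= big1 ?addr0 ?[_ * M]mulrC //.
move=> r; case: q => k l; case: r => k' l' /=.
rewrite xpair_eqE negb_and => H.
by rewrite [k == _]eq_sym [l == _]eq_sym; case: (k' == k) H; case: (l' == l) => //= _; rewrite mulr0.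
Qed.

Lemma P1c (R : realType) K m1 m2 (f : rgrid R K) :
  \sum_i \sum_j fmult m1 f i j * Num.conj (fmult m2 f i j) =
  (2 * K + 1)%N%:R ^+ 2 * \sum_k \sum_l
     (m1 (freq k) (freq l) * fhat f k l * Num.conj (m2 (freq k) (freq l) * fhat f k l)).
Proof.
set a := fun q : gidx K * gidx K => m1 (freq q.1) (freq q.2) * fhat f q.1 q.2.
set b := fun q : gidx K * gidx K => m2 (freq q.1) (freq q.2) * fhat f q.1 q.2.
have E : forall i j, fmult m1 f i j * Num.conj (fmult m2 f i j) =
  \sum_q \sum_r (a q * Num.conj (b r)) * (fmode R q.1 q.2 i j * Num.conj (fmode R r.1 r.2 i j)).
  move=> i j; rewrite !fmult_pair rmorph_sum big_distrlr /=.
  apply: eq_bigr => q _; apply: eq_bigr => r _.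
  by rewrite !rmorphM /a /b /=; ring.
under eq_bigr do under eq_bigr do rewrite E.
rewrite pair_bigA /= exchange_big /=.
under eq_bigr do rewrite exchange_big /=.
transitivity (\sum_q \sum_r (a q * Num.conj (b r)) *
   (if (q.1 == r.1) && (q.2 == r.2) then ((2 * K + 1)%N%:R ^+ 2 : R[i]) else 0)).
  apply: eq_bigr => q _; apply: eq_bigr => r _.
  by rewrite -orth pair_bigA mulr_sumr.
by rewrite sum_delta pair_bigA.
Qed.

Lemma conj_real (R : realType) (x : R) : Num.conj (x%:C) = x%:C.
Proof. rewrite (_ : Num.conj (x%:C) = conjc (x%:C)) //; exact: conjc_real. Qed.

Lemma conj_fhat (R : realType) K (f : rgrid R K) k l :
  Num.conj (fhat f k l) = (((2 * K + 1)%N%:R ^+ 2)^-1 : R[i]) *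
    \sum_i \sum_j (f i j)%:C * fmode R k l i j.
Proof.
rewrite /fhat rmorphM fmorphV rmorphXn rmorph_nat rmorph_sum; congr (_ * _).
apply: eq_bigr => i _; rewrite rmorph_sum; apply: eq_bigr => j _.
by rewrite rmorphM /= conjCK conj_real.
Qed.

Lemma P2c (R : realType) K m (f : rgrid R K) :
  \sum_i \sum_j fmult m f i j * Num.conj ((f i j)%:C) =
  (2 * K + 1)%N%:R ^+ 2 * \sum_k \sum_l
     (m (freq k) (freq l) * fhat f k l * Num.conj (fhat f k l)).
Proof.
have NZ : ((2 * K + 1)%N%:R ^+ 2 : R[i]) != 0 by rewrite expf_neq0 // pnatr_eq0 addn1.
have C : forall q : gidx K * gidx K, \sum_p (f p.1 p.2)%:C * fmode R q.1 q.2 p.1 p.2 =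
   (2 * K + 1)%N%:R ^+ 2 * Num.conj (fhat f q.1 q.2).
  by move=> q; rewrite conj_fhat mulVKf // pair_bigA.
set a := fun q : gidx K * gidx K => m (freq q.1) (freq q.2) * fhat f q.1 q.2.
have E : forall i j, fmult m f i j * Num.conj ((f i j)%:C) =
  \sum_q a q * ((f i j)%:C * fmode R q.1 q.2 i j).
  move=> i j; rewrite fmult_pair conj_real mulr_suml.
  by apply: eq_bigr => q _; rewrite /a; ring.
under eq_bigr do under eq_bigr do rewrite E.
rewrite pair_bigA /= exchange_big /=.
under eq_bigr do rewrite -mulr_sumr C.
rewrite (pair_bigA _ (fun k l => m (freq k) (freq l) * fhat f k l * Num.conj (fhat f k l))) mulr_sumr.
by apply: eq_bigr => q _; rewrite /a; ring.
Qed.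

Lemma ReD (R : realType) (z1 z2 : R[i]) : complex.Re (z1 + z2) = complex.Re z1 + complex.Re z2.
Proof. by case: z1; case: z2. Qed.

Lemma Re_sum (R : realType) (I : finType) (F : I -> R[i]) :
  complex.Re (\sum_i F i) = \sum_i complex.Re (F i).
Proof. by apply: (big_morph _ (@ReD R)). Qed.

Lemma Re_realM (R : realType) (x : R) (z : R[i]) : complex.Re (x%:C * z) = x * complex.Re z.
Proof. by case: z => a b; simpc. Qed.

Lemma Re_Mreal (R : realType) (x : R) (z : R[i]) : complex.Re (z * x%:C) = complex.Re z * x.
Proof. by rewrite mulrC Re_realM mulrC. Qed.

Lemma mulJ (R : realType) (z : R[i]) : z * Num.conj z = (complex.Re z ^+ 2 + complex.Im z ^+ 2)%:C.
Proof.
rewrite (_ : Num.conj z = conjc z) //; case: z => a b /=; simpc.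
by rewrite -complexr0 !expr2 [b * a]mulrC addNr.
Qed.

Definition w {R : realType} {K} (f : rgrid R K) k l :=
  complex.Re (fhat f k l) ^+ 2 + complex.Im (fhat f k l) ^+ 2.

Lemma ginnerE (R : realType) K (g1 g2 : cgrid R K) :
  ginner g1 g2 = complex.Re ((hstep R K ^+ 2)%:C * \sum_i \sum_j g1 i j * Num.conj (g2 i j)).
Proof.
rewrite Re_realM Re_sum /ginner; congr (_ * _); apply: eq_bigr => i _.
by rewrite Re_sum.
Qed.

Lemma hN (R : realType) K :
  (hstep R K ^+ 2)%:C * ((2 * K + 1)%N%:R ^+ 2 : R[i]) = 1.
Proof.
rewrite -(rmorph_nat (real_complex R)) -rmorphXn -rmorphM -exprMn.
by rewrite /hstep mulVf ?Nnz // expr1n.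
Qed.

Lemma P1 (R : realType) K m1 m2 (f : rgrid R K) :
  ginner (fmult m1 f) (fmult m2 f) =
  \sum_k \sum_l complex.Re (m1 (freq k) (freq l) * Num.conj (m2 (freq k) (freq l))) * w f k l.
Proof.
rewrite ginnerE P1c mulrA hN mul1r Re_sum; apply: eq_bigr => k _.
rewrite Re_sum; apply: eq_bigr => l _.
rewrite rmorphM /= mulrACA -mulrA mulJ mulrA Re_Mreal.
by [].
Qed.

Lemma P2 (R : realType) K m (f : rgrid R K) :
  ginner (fmult m f) (liftC f) =
  \sum_k \sum_l complex.Re (m (freq k) (freq l)) * w f k l.
Proof.
rewrite ginnerE /liftC P2c mulrA hN mul1r Re_sum; apply: eq_bigr => k _.
rewrite Re_sum; apply: eq_bigr => l _.
by rewrite -mulrA mulJ Re_Mreal.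
Qed.

Lemma poly4 {R : realFieldType} (v B : R) :
  (33/32) * B * v ^+ 3 <= v ^+ 4 / 2 + B ^+ 4.
Proof.
have E : v ^+ 4 / 2 + B ^+ 4 - (33/32) * B * v ^+ 3 =
  2^-1 * (v ^+ 2 - 33/32 * B * v - 9/10 * B ^+ 2) ^+ 2 +
  (2560/3771) * (B * (3771/5120 * v - 297/320 * B)) ^+ 2 + 107/10475 * (B ^+ 2) ^+ 2.
  by field.
rewrite -subr_ge0 E.
have hX := sqr_ge0 (v ^+ 2 - 33/32 * B * v - 9/10 * B ^+ 2).
have hY := sqr_ge0 (B * (3771/5120 * v - 297/320 * B)).
have hZ := sqr_ge0 (B ^+ 2).
lra.
Qed.

Lemma gamma_facts (R : realType) (kappa : R) : 0 <= kappa ->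
  3 * (1 + kappa) <= gamma0 kappa.
Proof.
move=> k0.
have e0 : 0 < expR (-2 : R) by exact: expR_gt0.
have e1 : expR (-2 : R) < 1 by rewrite expR_lt1 oppr_lt0 ltr0n.
have H : C4 R * (1 - expR (-2)) = 1.
  by rewrite /C4 mulVf // subr_eq0 eq_sym lt_eqF.
have : 1 <= C4 R.
  have Cp : 0 < C4 R by rewrite /C4 invr_gt0 subr_gt0.
  nra.
rewrite /gamma0 => c1; nra.
Qed.

Lemma mode_ineq (R : realType) (eps kappa dt A lam : R) :
  0 < eps -> 4^-1 <= kappa -> 0 < dt ->
  (gamma0 kappa - 4^-1 * kappa) ^+ 4 / (alpha0 kappa ^+ 2 * eps ^+ 2) <= A ->
  0 < lam ->
  gamma0 kappa * lam <= (2^-1 * eps ^+ 2 + A * dt ^+ 2) * lam ^+ 2 + kstar kappa * lam +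
    (dt^-1 * (dt * (eps ^+ 2 * lam ^+ 2 + kappa * lam) /
       (1 - expR (- (dt * (eps ^+ 2 * lam ^+ 2 + kappa * lam))))) -
     (eps ^+ 2 * lam ^+ 2 + kappa * lam)).
Proof.
move=> ep kp dp HA lp.
have k0 : 0 <= kappa by apply: le_trans kp; rewrite invr_ge0 ler0n.
have g3 := gamma_facts R kappa k0.
rewrite /kstar.
set g := gamma0 kappa in HA g3 *.
set B := g - 4^-1 * kappa in HA *.
have B2 : 2 <= B by rewrite /B; lra.
have gk : 0 < g - 2^-1 * kappa by lra.
have gk' : 0 < g + 2^-1 * kappa by lra.
set y := (g + 2^-1 * kappa) / (g - 2^-1 * kappa).
have y1 : 1 < y by rewrite /y ltr_pdivlMr // mul1r; lra.
have a0 : 0 < alpha0 kappa by exact: ln_gt0.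
have ea : expR (alpha0 kappa) = y.
  by rewrite /alpha0 lnK // posrE; apply: lt_trans y1.
set Lam := eps ^+ 2 * lam ^+ 2 + kappa * lam.
have LamE : Lam = lam * (eps ^+ 2 * lam + kappa) by rewrite /Lam; ring.
have L0 : 0 < Lam by rewrite LamE mulr_gt0 // ltr_wpDr // mulr_gt0 // exprn_gt0.
set x := dt * Lam.
have x0 : 0 < x by rewrite mulr_gt0.
set E := expR (- x).
have E0 : 0 < E by exact: expR_gt0.
have E1 : E < 1 by rewrite expR_lt1 oppr_lt0.
have VE : dt^-1 * (x / (1 - E)) - Lam = Lam * E / (1 - E).
  rewrite /x; field; rewrite subr_eq0 eq_sym (lt_eqF E1) /=; exact: lt0r_neq0.
rewrite VE.
set V := Lam * E / (1 - E).
have VE' : V * (1 - E) = Lam * E by rewrite /V mulfVK // subr_eq0 eq_sym lt_eqF.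
have V0 : 0 <= V by rewrite /V divr_ge0 ?subr_ge0 ?mulr_ge0 ?ltW.
have den : 0 < alpha0 kappa ^+ 2 * eps ^+ 2 by rewrite mulr_gt0 // exprn_gt0.
have HA' : B ^+ 4 <= A * (alpha0 kappa ^+ 2 * eps ^+ 2) by rewrite -ler_pdivrMr.
have B4 : 0 <= B ^+ 4 by rewrite exprn_ge0 // (le_trans _ B2) // ler0n.
have A0 : 0 <= A.
  apply: le_trans HA; by rewrite divr_ge0 // ltW.
have T0 : 0 <= 2^-1 * eps ^+ 2 + A * dt ^+ 2.
  apply: addr_ge0; apply: mulr_ge0; rewrite ?sqr_ge0 ?invr_ge0 ?ler0n //.
have l2 : 0 <= (2^-1 * eps ^+ 2 + A * dt ^+ 2) * lam ^+ 2 by rewrite mulr_ge0 ?sqr_ge0.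
case: (lerP x (alpha0 kappa)) => Hx.
- have HE : y^-1 <= E by rewrite -ea -expRN /E ler_expR lerN2.
  have HE' : g - 2^-1 * kappa <= E * (g + 2^-1 * kappa).
    by move: HE; rewrite /y invf_div ler_pdivrMr.
  have HV : lam * (g - 2^-1 * kappa) <= V.
    have : lam * (g - 2^-1 * kappa) * (1 - E) <= V * (1 - E).
      rewrite VE' /Lam.
      have : 0 <= eps ^+ 2 * lam ^+ 2 * E by apply: mulr_ge0; [apply: mulr_ge0; exact: sqr_ge0 | exact: ltW].
      nra.
    by rewrite ler_pM2r // subr_gt0.
  nra.
- set u := eps ^+ 2 * lam.
  set v := u + kappa.
  set T := A * dt ^+ 2 * lam.
  have u0 : 0 < u by rewrite /u mulr_gt0 // exprn_gt0.
  have v0 : 0 < v by rewrite /v; lra.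
  have T0' : 0 <= T by rewrite /T; apply: mulr_ge0; [apply: mulr_ge0; [exact: A0|exact: sqr_ge0]|exact: ltW].
  have xE : x = dt * lam * v by rewrite /x LamE /v /u; ring.
  have Tuv : T * u * v ^+ 2 = A * eps ^+ 2 * x ^+ 2 by rewrite xE /T /u; ring.
  have ax : alpha0 kappa ^+ 2 <= x ^+ 2 by nra.
  have Ae : 0 <= A * eps ^+ 2 by apply: mulr_ge0; [exact: A0 | exact: sqr_ge0].
  have H1 : B ^+ 4 <= T * u * v ^+ 2.
    rewrite Tuv; apply: le_trans HA' _.
    have -> : A * (alpha0 kappa ^+ 2 * eps ^+ 2) = A * eps ^+ 2 * alpha0 kappa ^+ 2 by ring.
    exact: ler_wpM2l.
  have H2 : T * u * v ^+ 2 <= T * v ^+ 3.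
    have Tv : 0 <= T * v ^+ 2 by apply: mulr_ge0; [exact: T0' | exact: sqr_ge0].
    have uv : u <= v by rewrite /v; lra.
    have -> : T * u * v ^+ 2 = T * v ^+ 2 * u by ring.
    have -> : T * v ^+ 3 = T * v ^+ 2 * v by ring.
    exact: ler_wpM2l.
  have P := poly4 v B.
  have H3 : B + 16^-1 - v / 2 <= T.
    have : (B + 16^-1 - v / 2) * v ^+ 3 <= T * v ^+ 3.
      have : 0 <= B * v ^+ 3 by rewrite mulr_ge0 ?exprn_ge0 ?ltW // (lt_le_trans _ B2).
      nra.
    by rewrite ler_pM2r // exprn_gt0.
  have H4 : g <= u / 2 + T + kappa - 8^-1 by rewrite /v /B in H3 *; lra.
  have : g * lam <= (u / 2 + T + kappa - 8^-1) * lam by rewrite ler_pM2r.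
  rewrite /u /T => H5.
  have -> : (2^-1 * eps ^+ 2 + A * dt ^+ 2) * lam ^+ 2 = (eps ^+ 2 * lam / 2 + A * dt ^+ 2 * lam) * lam.
    by ring.
  lra.
Qed.

Lemma fmult_comb (R : realType) K (c : R[i]) m1 m2 (f : rgrid R K) :
  (fun i j => c * fmult m1 f i j - fmult m2 f i j) =
  fmult (fun k l => c * m1 k l - m2 k l) f.
Proof.
apply: funext => i; apply: funext => j; rewrite /fmult mulr_sumr -sumrB.
apply: eq_bigr => k _; rewrite mulr_sumr -sumrB; apply: eq_bigr => l _.
by ring.
Qed.

Lemma sum_comb (R : realType) (I J : finType) (a b c : R) (X Y Z : I -> J -> R) :
  a * (\sum_i \sum_j X i j) + b * (\sum_i \sum_j Y i j) + \sum_i \sum_j Z i j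
  - c * \sum_i \sum_j Y i j =
  \sum_i \sum_j (a * X i j + b * Y i j + Z i j - c * Y i j).
Proof.
rewrite !mulr_sumr -!big_split /= -sumrB; apply: eq_bigr => i _.
by rewrite !mulr_sumr -!big_split /= -sumrB.
Qed.

Lemma lap_eq (R : realType) K (f : rgrid R K) :
  gnorm2 (LapN f) = \sum_k \sum_l lam R (freq k) (freq l) ^+ 2 * w f k l.
Proof.
rewrite /gnorm2 /LapN P1; apply: eq_bigr => k _; apply: eq_bigr => l _.
by rewrite conj_real -rmorphM /= mulrNN expr2.
Qed.

Lemma grad_eq (R : realType) K (f : rgrid R K) :
  gradnorm2 f = \sum_k \sum_l lam R (freq k) (freq l) * w f k l.
Proof.
rewrite /gradnorm2 /gnorm2 /DNx /DNy !P1 -big_split; apply: eq_bigr => k _.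
rewrite -big_split; apply: eq_bigr => l _.
rewrite !mulJ /= /lam; ring.
Qed.

Lemma zero_mode (R : realType) K (f : rgrid R K) k l :
  \sum_(i : gidx K) \sum_(j : gidx K) f i j = 0 ->
  freq k = 0 -> freq l = 0 -> w f k l = 0.
Proof.
move=> f0 hk hl; rewrite /w.
have -> : fhat f k l = 0.
  rewrite /fhat.
  have -> : \sum_(i : gidx K) \sum_(j : gidx K) (f i j)%:C * Num.conj (fmode R k l i j) =
     (\sum_(i : gidx K) \sum_(j : gidx K) f i j)%:C.
    rewrite rmorph_sum; apply: eq_bigr => i _; rewrite rmorph_sum; apply: eq_bigr => j _.
    by rewrite /fmode hk hl !mulr0z !mul0r addr0 mulr0 cis0 rmorph1 mulr1.
  by rewrite f0 mulr0.
by rewrite /= expr2 mulr0 addr0.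
Qed.

Lemma w_ge0 (R : realType) K (f : rgrid R K) k l : 0 <= w f k l.
Proof. by rewrite /w addr_ge0 // sqr_ge0. Qed.

Lemma sqr_pos (R : realType) (x : R) : x != 0 -> 0 < x ^+ 2.
Proof. by move=> hx; rewrite lt_def sqrf_eq0 hx sqr_ge0. Qed.

Theorem proposition2p2 (R : realType) (K : nat) (eps kappa dt A : R) :
  0 < eps -> 4^-1 <= kappa -> 0 < dt ->
  (gamma0 kappa - 4^-1 * kappa) ^+ 4 / (alpha0 kappa ^+ 2 * eps ^+ 2) <= A ->
  forall f : gidx K -> gidx K -> R,
    \sum_(i : gidx K) \sum_(j : gidx K) f i j = 0 ->
    (2^-1 * eps ^+ 2 + A * dt ^+ 2) * gnorm2 (LapN f)
    + kstar kappa * gradnorm2 f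
    + ginner (fun i j => dt^-1%:C * GN eps kappa dt f i j - LN eps kappa f i j) (liftC f)
    >= gamma0 kappa * gradnorm2 f.
Proof.
move=> ep kp dp HA f f0.
rewrite /GN /LN fmult_comb P2 lap_eq grad_eq -subr_ge0 sum_comb.
apply: sumr_ge0 => k _; apply: sumr_ge0 => l _.
have wk := w_ge0 R K f k l.
case: (boolP ((freq k == 0) && (freq l == 0))) => [/andP[/eqP hk /eqP hl]|hkl].
  rewrite (zero_mode R K f k l f0 hk hl); lra.

have lp : 0 < lam R (freq k) (freq l).
  rewrite /lam; move: hkl; rewrite negb_and => /orP[hk|hl].
  - have : 0 < (2 * (freq k)%:~R * pi : R) ^+ 2.
      apply: sqr_pos; apply: mulf_neq0; last by apply: lt0r_neq0; exact: pi_gt0.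
      by apply: mulf_neq0; rewrite ?intr_eq0 // pnatr_eq0.
    by move=> h; apply: (lt_le_trans h); rewrite lerDl sqr_ge0.
  - have : 0 < (2 * (freq l)%:~R * pi : R) ^+ 2.
      apply: sqr_pos; apply: mulf_neq0; last by apply: lt0r_neq0; exact: pi_gt0.
      by apply: mulf_neq0; rewrite ?intr_eq0 // pnatr_eq0.
    by move=> h; apply: (lt_le_trans h); rewrite lerDr sqr_ge0.
have M := mode_ineq _ _ _ _ _ _ ep kp dp HA lp.
rewrite -!rmorphM -rmorphB /=.
rewrite /Lam in M *.
set V := (X in _ <= _ + _ + X) in M.
set a := 2^-1 * eps ^+ 2 + A * dt ^+ 2 in M *.
set lm := lam R (freq k) (freq l) in M *.
have : gamma0 kappa * lm * w f k l <= (a * lm ^+ 2 + kstar kappa * lm + V) * w f k l.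
  by apply: ler_wpM2r.
move=> H; rewrite -/V.
have -> : a * (lm ^+ 2 * w f k l) + kstar kappa * (lm * w f k l) + V * w f k l
  - gamma0 kappa * (lm * w f k l) =
  (a * lm ^+ 2 + kstar kappa * lm + V) * w f k l - gamma0 kappa * lm * w f k l by ring.
by rewrite subr_ge0.
Qed.
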